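(* Let $n\ge1$ and let $\mathfrak{n}=\mathfrak{n}(n)$ be as in the context. Let $D$ be a diagonalizable derivation of $\mathfrak{n}$ with eigenvalues $1$, $2$ and $3$. Then the eigenspaces of $D$ for the eigenvalues $1,2,3$ have dimensions $d_1=n+3$, $d_2=\frac{n(n+1)}{2}+3$ and $d_3=2n+2$ respectively. In particular, if $\mathfrak{n}=\tilde{\mathfrak{n}}_1\oplus\tilde{\mathfrak{n}}_2\oplus\tilde{\mathfrak{n}}_3$ is any grading of $\mathfrak{n}$, then $\dim\tilde{\mathfrak{n}}_i=d_i$ for $i=1,2,3$.
   Context: Fix a field of characteristic zero and a positive integer $n$. The Lie algebra $\mathfrak{n}(n)$ has basis $e_1,\dots,e_n,a,b,x$; $u,y$; $e_i\wedge e_j$ ($1\le i<j\le n$); $c$; $x_1,\dots,x_n$; $u_1,\dots,u_n$; $y_1,\dots,y_n$; $f,h$. Its bracket is defined on basis elements by: $[e_i,e_j]=e_i\wedge e_j$ for $i<j$ (so $[e_j,e_i]=-e_i\wedge e_j$), $[e_i,x]=x_i$, $[e_i,u]=u_i$, $[e_i,y]=y_i$, $[a,b]=c$, $[a,y]=f$, $[a,c]=h$, $[b,u]=h$, $[b,y]=h$, $[x,u]=f$, $[x,y]=h$, extended by antisymmetry, and all other brackets of pairs of basis elements are zero. A grading $\mathfrak{n}=\tilde{\mathfrak{n}}_1\oplus\tilde{\mathfrak{n}}_2\oplus\tilde{\mathfrak{n}}_3$ is a vector space decomposition with $[\tilde{\mathfrak{n}}_i,\tilde{\mathfrak{n}}_j]\subset\tilde{\mathfrak{n}}_{i+j}$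 for all $i,j$, where $\tilde{\mathfrak{n}}_m=0$ for $m>3$. *)

(* Defs.v *)
From HB Require Import structures.
From mathcomp Require Import all_boot all_order all_algebra.
Set Implicit Arguments. Unset Strict Implicit. Unset Printing Implicit Defensive.
Import GRing.Theory.
Local Open Scope ring_scope.

(* Basis of the Lie algebra n(n):
   e_1..e_n, a, b, x ; u, y ; e_i /\ e_j (i<j) ; c ; x_1..x_n ; u_1..u_n ;
   y_1..y_n ; f, h.  Indices 1..n are represented by 'I_n (0-based). *)
Inductive nbasis (n : nat) : Type :=
  | bE of 'I_n | bA | bB | bX | bU | bY
  | bW of {p : 'I_n * 'I_n | (p.1 < p.2)%N}
  | bC | bXi of 'I_n | bUi of 'I_n | bYi of 'I_n | bF | bH.

Arguments bA {n}. Arguments bB {n}. Arguments bX {n}. Arguments bU {n}.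
Arguments bY {n}. Arguments bC {n}. Arguments bF {n}. Arguments bH {n}.

Section NBasisFin.
Variable n : nat.
Definition wT := {p : 'I_n * 'I_n | (p.1 < p.2)%N}.
Definition codeT := ('I_n + ('I_n + ('I_n + ('I_n + (wT + 'I_8)))))%type.

Definition nb_enc (z : nbasis n) : codeT :=
  match z with
  | bE i => inl i
  | bXi i => inr (inl i)
  | bUi i => inr (inr (inl i))
  | bYi i => inr (inr (inr (inl i)))
  | bW p => inr (inr (inr (inr (inl p))))
  | bA => inr (inr (inr (inr (inr (@Ordinal 8 0 isT)))))
  | bB => inr (inr (inr (inr (inr (@Ordinal 8 1 isT)))))
  | bX => inr (inr (inr (inr (inr (@Ordinal 8 2 isT)))))
  | bU => inr (inr (inr (inr (inr (@Ordinal 8 3 isT)))))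
  | bY => inr (inr (inr (inr (inr (@Ordinal 8 4 isT)))))
  | bC => inr (inr (inr (inr (inr (@Ordinal 8 5 isT)))))
  | bF => inr (inr (inr (inr (inr (@Ordinal 8 6 isT)))))
  | bH => inr (inr (inr (inr (inr (@Ordinal 8 7 isT)))))
  end.

Definition nb_dec (c : codeT) : nbasis n :=
  match c with
  | inl i => bE i
  | inr (inl i) => bXi i
  | inr (inr (inl i)) => bUi i
  | inr (inr (inr (inl i))) => bYi i
  | inr (inr (inr (inr (inl p)))) => bW p
  | inr (inr (inr (inr (inr k)))) =>
      match val k with
      | 0 => bA | 1 => bB | 2 => bX | 3 => bU | 4 => bY | 5 => bC | 6 => bF
      | _ => bH
      end
  end.

Lemma nb_encK : cancel nb_enc nb_dec.
Proof. by case. Qed.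
End NBasisFin.

#[hnf] HB.instance Definition _ (n : nat) :=
  Countable.copy (nbasis n) (can_type (@nb_encK n)).
#[hnf] HB.instance Definition _ (n : nat) :=
  Finite.copy (nbasis n) (can_type (@nb_encK n)).

Definition nalg (F : fieldType) (n : nat) := {ffun nbasis n -> F^o}.

(* The Lie bracket, defined by bilinear extension of the bracket on basis
   elements given in the paper (antisymmetric, all unlisted brackets zero). *)
Definition nbr (F : fieldType) (n : nat) (v w : nalg F n) : nalg F n :=
  let alt (p q : nbasis n) : F^o := v p * w q - v q * w p in
  [ffun z : nbasis n =>
    (match z with
    | bW p => alt (bE (sval p).1) (bE (sval p).2)   (* [e_i,e_j] = e_i/\e_j *)
    | bXi i => alt (bE i) bX                         (* [e_i,x] = x_i *)
    | bUi i => alt (bE i) bU                         (* [e_i,u] = u_i *)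
    | bYi i => alt (bE i) bY                         (* [e_i,y] = y_i *)
    | bC => alt bA bB                                (* [a,b] = c *)
    | bF => alt bA bY + alt bX bU                    (* [a,y] = [x,u] = f *)
    | bH => alt bA bC + alt bB bU + alt bB bY + alt bX bY
                       (* [a,c] = [b,u] = [b,y] = [x,y] = h *)
    | _ => 0
    end : F^o)].

Definition is_derivation (F : fieldType) (n : nat) (D : 'End(nalg F n)) :=
  forall v w, D (nbr v w) = nbr (D v) w + nbr v (D w).

Definition is_grading3 (F : fieldType) (n : nat) (N1 N2 N3 : {vspace nalg F n}) :=
  let N (k : nat) := match k with 1 => N1 | 2 => N2 | 3 => N3 | _ => 0%VS end in
  [/\ directv (N1 + N2 + N3)%VS, (N1 + N2 + N3)%VS = fullv &
    forall i j : nat, (1 <= i <= 3)%N -> (1 <= j <= 3)%N ->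
      forall v w, v \in N i -> w \in N j -> nbr v w \in N (i + j)%N].

(* Main.v *)
Require Import Defs.
From HB Require Import structures.
From mathcomp Require Import all_boot all_order all_algebra.
From mathcomp Require Import ring zify.
Import GRing.Theory.
Local Open Scope ring_scope.
Set Implicit Arguments. Unset Strict Implicit.
Section S.
Variables (F : fieldType) (n : nat).
Local Notation V := (nalg F n).
Local Notation nb := (nbasis n).
Definition nbeq (s t : nb) : bool :=
  match s, t with
  | bE i, bE j => i == j | bA, bA => true | bB, bB => true | bX, bX => true
  | bU, bU => true | bY, bY => true | bW p, bW q => p == q | bC, bC => true
  | bXi i, bXi j => i == j | bUi i, bUi j => i == j | bYi i, bYi j => i == j
  | bF, bF => true | bH, bH => true | _, _ => false end.
Lemma nbeqE s t : nbeq s t = (s == t).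
Proof.
apply/idP/eqP => [|->]; last by case: t => * /=.
by case: s; case: t => //= *; congr _; apply/eqP.
Qed.
Definition dlt (z : nb) : V := [ffun t => ((nbeq t z)%:R : F)].
Lemma scE (k x : F^o) : k *: x = k * x. Proof. by []. Qed.

Lemma dimfull : \dim (fullv : {vspace V}) = #|{: nb}|.
Proof. by rewrite dimvf /dim /= muln1. Qed.

Definition Sp (A : pred nb) : {vspace V} := <<[seq dlt z | z <- enum A]>>%VS.

Lemma decomp (A : pred nb) (v : V) : (forall z, z \notin A -> v z = 0) ->
  v = \sum_(z in A) v z *: dlt z.
Proof.
move=> H; apply/ffunP => t; rewrite sum_ffunE.
rewrite (eq_bigr (fun z => if z == t then v t else 0)); last first.
  move=> z _; rewrite !ffunE scE nbeqE eq_sym; case: eqP => [->|_]; by rewrite ?mulr1 ?mulr0.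
case At: (t \in A).
  by rewrite (bigD1 t) //= eqxx big1 ?addr0 // => z /andP[_ /negbTE ->].
rewrite big1 ?H ?At // => z Az; case: eqP => // zt; move: Az; by rewrite zt At.
Qed.

Lemma dlt_Sp (A : pred nb) z : z \in A -> dlt z \in Sp A.
Proof. by move=> Az; apply: memv_span; apply: map_f; rewrite mem_enum. Qed.

Lemma Sp_sub (A : pred nb) (U : {vspace V}) : (forall z, z \in A -> dlt z \in U) -> (Sp A <= U)%VS.
Proof. move=> H; apply/span_subvP => w /mapP[z]; rewrite mem_enum => Az ->; exact: H. Qed.

Lemma memSp (A : pred nb) v : (v \in Sp A) <-> (forall z, z \notin A -> v z = 0).
Proof.
split; last first.
  move=> H; rewrite (@decomp A v H); apply/rpred_sum => z Az; apply: memvZ; exact: dlt_Sp.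
move=> vA z zA.
rewrite (coord_span (X := in_tuple [seq dlt z | z <- enum A]) vA) sum_ffunE big1 // => i _.
have Hi : (i < size (enum A))%N by rewrite -(size_map dlt); exact: ltn_ord.
rewrite ffunE /= (nth_map z) // ffunE scE nbeqE.
have : nth z (enum A) i \in A by rewrite -mem_enum mem_nth.
by case: eqP => [<-|]; rewrite ?(negbTE zA) ?mulr0.
Qed.

Lemma Sp_dim_le (A : pred nb) : (\dim (Sp A) <= #|A|)%N.
Proof. by rewrite (leq_trans (dim_span _)) // size_map -cardE. Qed.

Lemma Sp_dim (A : pred nb) : \dim (Sp A) = #|A|.
Proof.
have h1 : (Sp A :&: Sp (predC A) = 0)%VS.
  apply/eqP; rewrite -subv0; apply/subvP => v /memv_capP[/memSp H1 /memSp H2].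
  rewrite memv0; apply/eqP/ffunP => z; rewrite ffunE; case Az: (z \in A).
    by apply: H2; apply/negPn.
  by apply: H1; rewrite Az.
have h2 : (Sp A + Sp (predC A) = fullv)%VS.
  apply/eqP; rewrite eqEsubv subvf /=; apply/subvP => v _.
  have -> : v = \sum_(z in A) v z *: dlt z + \sum_(z in predC A) v z *: dlt z.
    rewrite {1}(@decomp predT v) // (bigID (mem A)) /=; congr (_ + _); apply: eq_bigl => z //.
  apply: memv_add; apply/rpred_sum => z Az; apply: memvZ; exact: dlt_Sp.
have := dimv_add_leqif (Sp A) (Sp (predC A)).
rewrite h2 dimfull h1 subvv => /leqifP /= /eqP E.
have := Sp_dim_le A; have := Sp_dim_le (predC A).
have := cardC A; have -> : #|predC A| = #|[predC A]| by [].
move: E; rewrite /=. move=> E C1 C2 C3. rewrite -C1 in E. lia.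
Qed.

Lemma nbrDl (u v w : V) : nbr (u + v) w = nbr u w + nbr v w.
Proof. apply/ffunP => z; rewrite !ffunE; case: z => * /=; rewrite ?ffunE /=; ring. Qed.
Lemma nbrZl k (v w : V) : nbr (k *: v) w = k *: nbr v w.
Proof. apply/ffunP => z; rewrite !ffunE; case: z => * /=; rewrite ?ffunE /= ?scE; ring. Qed.
Lemma nbrC (v w : V) : nbr v w = - nbr w v.
Proof. apply/ffunP => z; rewrite !ffunE; case: z => * /=; ring. Qed.
Lemma nbrDr (u v w : V) : nbr w (u + v) = nbr w u + nbr w v.
Proof. by rewrite nbrC nbrDl opprD -!nbrC. Qed.
Lemma nbrZr k (v w : V) : nbr w (k *: v) = k *: nbr w v.
Proof. by rewrite nbrC nbrZl -scalerN -nbrC. Qed.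
Lemma nbrNl (v w : V) : nbr (- v) w = - nbr v w.
Proof. by rewrite -scaleN1r nbrZl scaleN1r. Qed.
Lemma nbrNr (v w : V) : nbr w (- v) = - nbr w v.
Proof. by rewrite -scaleN1r nbrZr scaleN1r. Qed.
Lemma nbrBl (u v w : V) : nbr (u - v) w = nbr u w - nbr v w.
Proof. by rewrite nbrDl nbrNl. Qed.
Lemma nbrBr (u v w : V) : nbr w (u - v) = nbr w u - nbr w v.
Proof. by rewrite nbrDr nbrNr. Qed.
Lemma nbr0l (w : V) : nbr 0 w = 0.
Proof. by have := nbrZl 0 0 w; rewrite !scale0r. Qed.
Lemma nbr0r (w : V) : nbr w 0 = 0.
Proof. by have := nbrZr 0 0 w; rewrite !scale0r. Qed.


End S.

Section S.
Variables (F : fieldType) (n : nat).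
Local Notation V := (nalg F n).
Local Notation nb := (nbasis n).
Local Notation dlt := (@dlt F n).
Lemma bE_eq a b : (bE a == bE b :> nb) = (a == b).
Proof. by apply/eqP/eqP => [[]|->]. Qed.
Lemma bXi_eq a b : (bXi a == bXi b :> nb) = (a == b).
Proof. by apply/eqP/eqP => [[]|->]. Qed.
Lemma bUi_eq a b : (bUi a == bUi b :> nb) = (a == b).
Proof. by apply/eqP/eqP => [[]|->]. Qed.
Lemma bYi_eq a b : (bYi a == bYi b :> nb) = (a == b).
Proof. by apply/eqP/eqP => [[]|->]. Qed.
Lemma bW_eq a b : (bW a == bW b :> nb) = (a == b).
Proof. by apply/eqP/eqP => [[]|->]. Qed.

Ltac vcomp := apply/ffunP; case => *; rewrite !ffunE /= ?ffunE /= ?eqxx /=; ring.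

Lemma brAB : nbr (dlt bA) (dlt bB) = dlt bC. Proof. vcomp. Qed.
Lemma brAC : nbr (dlt bA) (dlt bC) = dlt bH. Proof. vcomp. Qed.
Lemma brXY : nbr (dlt bX) (dlt bY) = dlt bH. Proof. vcomp. Qed.
Lemma brBY : nbr (dlt bB) (dlt bY) = dlt bH. Proof. vcomp. Qed.
Lemma brBU : nbr (dlt bB) (dlt bU) = dlt bH. Proof. vcomp. Qed.
Lemma brAY : nbr (dlt bA) (dlt bY) = dlt bF. Proof. vcomp. Qed.
Lemma brXU : nbr (dlt bX) (dlt bU) = dlt bF. Proof. vcomp. Qed.
Lemma brEX i : nbr (dlt (bE i)) (dlt bX) = dlt (bXi i).
Proof. apply/ffunP; case => *; rewrite !ffunE /= ?bE_eq ?bXi_eq; ring. Qed.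
Lemma brEU i : nbr (dlt (bE i)) (dlt bU) = dlt (bUi i).
Proof. apply/ffunP; case => *; rewrite !ffunE /= ?bE_eq ?bUi_eq; ring. Qed.
Lemma brEY i : nbr (dlt (bE i)) (dlt bY) = dlt (bYi i).
Proof. apply/ffunP; case => *; rewrite !ffunE /= ?bE_eq ?bYi_eq; ring. Qed.
Lemma brEE (p : wT n) : nbr (dlt (bE (sval p).1)) (dlt (bE (sval p).2)) = dlt (bW p).
Proof.
apply/ffunP; case => [i||||||q||i|i|i||]; rewrite !ffunE /=; try ring.
case: p => [[i j] hij]; case: q => [[k l] hkl] /=; rewrite /=.
have -> : (exist (fun p : 'I_n * 'I_n => (p.1 < p.2)%N) (k,l) hkl == exist _ (i,j) hij) = (k == i) && (l == j).
  apply/eqP/andP => [[-> ->]//|[/eqP e1 /eqP e2]]; subst; congr exist; exact: bool_irrelevance.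
have H : ~~ ((l == i) && (k == j)).
  by apply/negP => /andP[/eqP e1 /eqP e2]; move: hij hkl; rewrite e1 e2 /=; lia.
by move: H; case: (l == i); case: (k == j); case: (k == i); case: (l == j) => //= _; rewrite /= ?mulr0 ?mulr1 ?subr0 ?sub0r ?mul0r //.
Qed.

Section Grading.
Variables N1 N2 N3 : {vspace V}.
Hypothesis G : is_grading3 N1 N2 N3.
Local Notation F2 := (N2 + N3)%VS.

Lemma gr_dim3 : (\dim N1 + \dim N2 + \dim N3)%N = #|{: nb}|.
Proof. case: G => /directvP /= D E _. by rewrite -D E dimfull. Qed.

Lemma b11 {v w} : v \in N1 -> w \in N1 -> nbr v w \in N2.
Proof. case: G => _ _ H; exact: (H 1%N 1%N). Qed.
Lemma b12 {v w} : v \in N1 -> w \in N2 -> nbr v w \in N3.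
Proof. case: G => _ _ H; exact: (H 1%N 2%N). Qed.
Lemma b21 {v w} : v \in N2 -> w \in N1 -> nbr v w \in N3.
Proof. case: G => _ _ H; exact: (H 2%N 1%N). Qed.
Lemma b13 {v w} : v \in N1 -> w \in N3 -> nbr v w = 0. Proof. move=> a b; apply/eqP; rewrite -memv0; case: G => _ _ H; exact: (H 1%N 3%N). Qed.
Lemma b31 {v w} : v \in N3 -> w \in N1 -> nbr v w = 0. Proof. move=> a b; apply/eqP; rewrite -memv0; case: G => _ _ H; exact: (H 3%N 1%N). Qed.
Lemma b22 {v w} : v \in N2 -> w \in N2 -> nbr v w = 0. Proof. move=> a b; apply/eqP; rewrite -memv0; case: G => _ _ H; exact: (H 2%N 2%N). Qed.
Lemma b23 {v w} : v \in N2 -> w \in N3 -> nbr v w = 0. Proof. move=> a b; apply/eqP; rewrite -memv0; case: G => _ _ H; exact: (H 2%N 3%N). Qed.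
Lemma b32 {v w} : v \in N3 -> w \in N2 -> nbr v w = 0. Proof. move=> a b; apply/eqP; rewrite -memv0; case: G => _ _ H; exact: (H 3%N 2%N). Qed.
Lemma b33 {v w} : v \in N3 -> w \in N3 -> nbr v w = 0. Proof. move=> a b; apply/eqP; rewrite -memv0; case: G => _ _ H; exact: (H 3%N 3%N). Qed.

Lemma in2F x : x \in N2 -> x \in F2. Proof. exact: (subvP (addvSl N2 N3)). Qed.
Lemma in3F x : x \in N3 -> x \in F2. Proof. exact: (subvP (addvSr N2 N3)). Qed.

Lemma dec3 v : exists v1, exists v2, exists v3,
  [/\ v1 \in N1, v2 \in N2, v3 \in N3 & v = v1 + v2 + v3].
Proof.
case: G => _ E _; have := memvf v; rewrite -E => /memv_addP[v12 /memv_addP[v1 h1 [v2 h2 ->]] [v3 h3 ->]].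
by exists v1, v2, v3.
Qed.

Lemma dec v : exists v1, exists g, [/\ v1 \in N1, g \in F2 & v = v1 + g].
Proof.
have [v1 [v2 [v3 [h1 h2 h3 ->]]]] := dec3 v.
by exists v1, (v2 + v3); split => //; [exact: memv_add | rewrite addrA].
Qed.

Lemma decF g : g \in F2 -> exists g2, exists g3, [/\ g2 \in N2, g3 \in N3 & g = g2 + g3].
Proof. by move=> /memv_addP[g2 h2 [g3 h3 ->]]; exists g2, g3. Qed.

Lemma brN3r {v t} : t \in N3 -> nbr v t = 0.
Proof.
move=> ht; have [v1 [v2 [v3 [h1 h2 h3 ->]]]] := dec3 v.
by rewrite !nbrDl (b13 h1 ht) (b23 h2 ht) (b33 h3 ht) !addr0.
Qed.
Lemma brN3l v t : t \in N3 -> nbr t v = 0.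
Proof. by move=> ht; rewrite nbrC brN3r ?oppr0. Qed.

Lemma brFr v g : g \in F2 -> nbr v g \in N3.
Proof.
move=> /decF[g2 [g3 [h2 h3 ->]]]; rewrite nbrDr (brN3r h3) addr0.
have [v1 [v2 [v3 [h1 h2' h3' ->]]]] := dec3 v.
by rewrite !nbrDl (b22 h2' h2) (b32 h3' h2) !addr0; exact: b12.
Qed.
Lemma brFl v g : g \in F2 -> nbr g v \in N3.
Proof. by move=> hg; rewrite nbrC rpredN brFr. Qed.

Lemma brF v w : nbr v w \in F2.
Proof.
have [v1 [g [h1 hg ->]]] := dec v.
rewrite nbrDl; apply: rpredD; last by apply: in3F; apply: brFl.
have [w1 [g' [h1' hg' ->]]] := dec w.
rewrite nbrDr; apply: rpredD; last by apply: in3F; apply: brFr.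
by apply: in2F; apply: b11.
Qed.

Lemma abF g g' : g \in F2 -> g' \in F2 -> nbr g g' = 0.
Proof.
move=> /decF[g2 [g3 [h2 h3 ->]]] /decF[g2' [g3' [h2' h3' ->]]].
by rewrite nbrDl !nbrDr (b22 h2 h2') (b23 h2 h3') (b32 h3 h2') (b33 h3 h3') !addr0.
Qed.

Lemma dimF_all : ((\dim N1 + \dim F2)%N = #|{: nb}|) /\ (N1 :&: F2 = 0)%VS /\ (N2 :&: N3 = 0)%VS.
Proof.
have h1 := dimv_add_leqif N2 N3; have h2 := dimv_add_leqif N1 F2.
have E3 := gr_dim3.
have E : (N1 + F2)%VS = fullv by case: G => _ E _; rewrite addvA.
rewrite E dimfull in h2.
case: h1 => [l1 e1]; case: h2 => [l2 e2].
have q1 : \dim F2 = (\dim N2 + \dim N3)%N by lia.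
have q2 : #|{: nb}| = (\dim N1 + \dim F2)%N by lia.
split; first by [].
split; apply/eqP; rewrite -subv0; [rewrite -e2 q2 | rewrite -e1 q1] => //.
Qed.

Lemma z1F x : x \in N1 -> x \in F2 -> x = 0.
Proof.
move=> a b; have [_ [E _]] := dimF_all; apply/eqP; rewrite -memv0 -E memv_cap a b. by [].
Qed.
Lemma z23 x : x \in N2 -> x \in N3 -> x = 0.
Proof.
move=> a b; have [_ [_ E]] := dimF_all; apply/eqP; rewrite -memv0 -E memv_cap a b. by [].
Qed.
End Grading.
End S.

Section Key.
Variables (F : fieldType) (n : nat) (N1 N2 N3 : {vspace nalg F n}).
Hypothesis G : is_grading3 N1 N2 N3.
Local Notation F2 := (N2 + N3)%VS.
Local Notation d := (@dlt F n).
Local Notation V := (nalg F n).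

Local Notation cA := (@bA n). Local Notation cB := (@bB n). Local Notation cX := (@bX n).
Local Notation cU := (@bU n). Local Notation cY := (@bY n). Local Notation cC := (@bC n).
Local Notation cF := (@bF n). Local Notation cH := (@bH n).
Ltac simp := rewrite /= ?mulr0 ?mul0r ?mulr1 ?mul1r ?subr0 ?sub0r ?addr0 ?add0r ?opprK ?oppr0.
Ltac ev z := move/(congr1 (fun v : V => v z)); rewrite !ffunE; simp.

Lemma inFC : d bC \in F2. Proof. rewrite -(brAB F n). exact: (brF G). Qed.




Lemma in3H : d bH \in N3. Proof. rewrite -(brAC F n); apply: (brFr G); exact: inFC. Qed.

Lemma F2a g : g \in F2 -> g bA = 0.
Proof. move=> hg; have := abF G hg inFC; ev (@bH n). by []. Qed.

Lemma F2b g : g \in F2 -> g bB = 0.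
Proof. move=> hg; have h3 := brFl G (d bA) hg. have := brN3l G (d bA) h3; ev (@bH n). by []. Qed.

Lemma solve (a b E k : F) : E = 0 -> a - b = k * E -> a = b.
Proof. by move=> -> /eqP; rewrite mulr0 subr_eq0 => /eqP. Qed.

Lemma key_pair P Q p1 p' q1 q' : p1 \in N1 -> p' \in F2 -> P = p1 + p' ->
  q1 \in N1 -> q' \in F2 -> Q = q1 + q' -> nbr P Q \in N3 ->
  nbr P Q - nbr P q' - nbr p' Q = 0.
Proof.
move=> h1 h1' eP h2 h2' eQ h3.
have e : nbr p1 q1 = nbr P Q - nbr P q' - nbr p' Q.
  have -> : p1 = P - p' by rewrite eP addrK.
  have -> : q1 = Q - q' by rewrite eQ addrK.
  by rewrite !nbrBl !nbrBr (abF G h1' h2') subr0.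
rewrite -e; apply: (z23 G (b11 G h1 h2)); rewrite e.
by apply: rpredB; [apply: rpredB => //; apply: (brFr G) | apply: (brFl G)].
Qed.

Definition C2p : pred (nbasis n) := fun z =>
  match z with bE _ | bA | bB | bX | bU | bY => false | _ => true end.

Lemma SpC2 : (@Sp F n C2p <= F2)%VS.
Proof.
apply: Sp_sub; case => [i||||||p||i|i|i||] //= _.
- by rewrite -(brEE F p); exact: (brF G).
- exact: inFC.
- by rewrite -(brEX F i); exact: (brF G).
- by rewrite -(brEU F i); exact: (brF G).
- by rewrite -(brEY F i); exact: (brF G).
- by rewrite -(brAY F n); exact: (brF G).
- by rewrite -(brAC F n); exact: (brF G).
Qed.

Lemma keyUY : d cU \in F2 /\ d cY \in F2.
Proof.
have [x1 [x' [hx1 hx' ex]]] := dec G (d cX).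
have [y1 [y' [hy1 hy' ey]]] := dec G (d cY).
have [u1 [u' [hu1 hu' eu]]] := dec G (d cU).
have [b1 [b' [hb1 hb' eb]]] := dec G (d cB).
have Exy := key_pair hx1 hx' ex hy1 hy' ey (ltac:(rewrite (brXY F n); exact: in3H)).
have Eby := key_pair hb1 hb' eb hy1 hy' ey (ltac:(rewrite (brBY F n); exact: in3H)).
have Ebu := key_pair hb1 hb' eb hu1 hu' eu (ltac:(rewrite (brBU F n); exact: in3H)).
rewrite ?(brXY F n) ?(brBY F n) ?(brBU F n) in Exy Eby Ebu.
have := Exy; ev (@bH n). move=> e1.
have := Exy; ev (@bF n). move=> e2.
have := Eby; ev (@bH n). move=> e3.
have := Ebu; ev (@bH n). move=> e4.
have := Ebu; ev (@bF n). move=> e5.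
rewrite ?(F2a hx') ?(F2b hx') ?(F2a hy') ?(F2b hy') ?(F2a hu') ?(F2b hu') ?(F2a hb') ?(F2b hb') in e1 e2 e3 e4 e5.
have yu : y' cU = 0 by apply: (solve (k := -1) e2); ring.
have bx : b' cX = 0 by apply: (solve (k := -1) e5); ring.
have yy : y' cY = 1 by apply: (solve (k := -1) e3); rewrite yu bx; ring.
have xx : x' cX = 0 by apply: (solve (k := -1) e1); rewrite yy; ring.
have eF : d cF = nbr (d cA) y' - y' cC *: d cH.
  by apply/ffunP; case => [i||||||q||i|i|i||]; rewrite !ffunE /= ?scE; simp; rewrite ?(F2b hy') ?yy ?subrr.
have in3F : d cF \in N3.
  by rewrite eF; apply: rpredB; [apply: (brFr G) | apply: rpredZ; exact: in3H].
have Exu := key_pair hx1 hx' ex hu1 hu' eu (ltac:(rewrite (brXU F n); exact: in3F)).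
rewrite (brXU F n) in Exu.
have := Exu; ev (@bF n); move=> e6.
have := Exu; ev (@bH n); move=> e7.
rewrite ?(F2a hx') ?(F2b hx') ?(F2a hu') ?(F2b hu') xx in e6 e7.
have uu : u' cU = 1 by apply: (solve (k := -1) e6); ring.
have uy : u' cY = 0 by apply: (solve (k := -1) e7); ring.
have Euy := abF G hu' hy'.
have := Euy; ev (@bF n); move=> e8.
have := Euy; ev (@bH n); move=> e9.
rewrite ?(F2a hy') ?(F2b hy') ?(F2a hu') ?(F2b hu') uu uy yu yy in e8 e9.
have yx : y' cX = 0 by apply: (solve (k := -1) e8); ring.
have ux : u' cX = 0 by apply: (solve (k := 1) e9); ring.
have ye : forall i, y' (bE i) = 0.
  move=> i; have := Euy; ev (bUi i); rewrite uu yu => e; by apply: (solve (k := -1) e); ring.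
have ue : forall i, u' (bE i) = 0.
  move=> i; have := Euy; ev (bYi i); rewrite uy yy => e; by apply: (solve (k := 1) e); ring.
have u10 : u1 = 0.
  apply: (z1F G hu1); apply: (subvP SpC2); apply/memSp.
  have -> : u1 = d cU - u' by rewrite eu addrK.
  case => [i||||||p||i|i|i||] //= _; rewrite !ffunE /= ?ue ?(F2a hu') ?(F2b hu') ?ux ?uu ?uy; simp; by rewrite ?subrr.
have y10 : y1 = 0.
  apply: (z1F G hy1); apply: (subvP SpC2); apply/memSp.
  have -> : y1 = d cY - y' by rewrite ey addrK.
  case => [i||||||p||i|i|i||] //= _; rewrite !ffunE /= ?ye ?(F2a hy') ?(F2b hy') ?yx ?yu ?yy; simp; by rewrite ?subrr.
by rewrite eu ey u10 y10 !add0r.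
Qed.

Definition W2p : pred (nbasis n) := fun z =>
  match z with bE _ | bA | bB | bX => false | _ => true end.
Definition W3p : pred (nbasis n) := fun z =>
  match z with bUi _ | bYi _ | bF | bH => true | _ => false end.
Definition E2p : pred (nbasis n) := fun z =>
  match z with bW _ | bXi _ => true | _ => false end.
Local Notation Spn := (@Sp F n).

Lemma F2_eq : F2 = Spn W2p.
Proof.
have [hU hY] := keyUY.
apply/eqP; rewrite eqEsubv; apply/andP; split.
  apply/subvP => g hg; apply/memSp; case => [i||||||p||i|i|i||] //= _.
  - by have := abF G hg hU; ev (bUi i).
  - exact: F2a.
  - exact: F2b.
  - by have := abF G hg hU; ev (@bF n).
apply: Sp_sub; case => [i||||||p||i|i|i||] //= _; try (apply: (subvP SpC2); exact: dlt_Sp).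
Qed.

Lemma brW2 v g : g \in Spn W2p -> nbr v g \in Spn W3p.
Proof.
move/memSp => hg; apply/memSp.
have g1 : forall i, g (bE i) = 0 by move=> i; apply: hg.
have ga : g cA = 0 by apply: hg. have gb : g cB = 0 by apply: hg. have gx : g cX = 0 by apply: hg.
case => [i||||||p||i|i|i||] //= _; rewrite !ffunE /= ?g1 ?ga ?gb ?gx; simp; by rewrite ?subrr.
Qed.
Lemma brW2l v g : g \in Spn W2p -> nbr g v \in Spn W3p.
Proof. by move=> hg; rewrite nbrC rpredN brW2. Qed.

Lemma pair_dec P Q p1 p' q1 q' : p' \in F2 -> P = p1 + p' -> q' \in F2 -> Q = q1 + q' ->
  nbr P Q = nbr p1 q1 + nbr P q' + nbr p' Q.
Proof.
move=> h1' eP h2' eQ.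
have -> : p1 = P - p' by rewrite eP addrK.
have -> : q1 = Q - q' by rewrite eQ addrK.
by rewrite !nbrBl !nbrBr (abF G h1' h2') subr0 addrAC !subrK.
Qed.

Lemma SpW3_sub : (Spn W3p <= N3)%VS.
Proof.
have [hU hY] := keyUY.
apply: Sp_sub; case => [i||||||p||i|i|i||] //= _.
- by rewrite -(brEU F i); exact: (brFr G).
- by rewrite -(brEY F i); exact: (brFr G).
- by rewrite -(brAY F n); exact: (brFr G).
- exact: in3H.
Qed.

Lemma E2_sub z : E2p z -> d z \in (N2 + Spn W3p)%VS.
Proof.
have key : forall P Q, nbr P Q \in (N2 + Spn W3p)%VS ->
  (forall p1 p' q1 q', p1 \in N1 -> p' \in F2 -> P = p1 + p' -> q1 \in N1 -> q' \in F2 -> Q = q1 + q' -> True) -> True by [].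
have gen : forall P Q, nbr P Q \in (N2 + Spn W3p)%VS.
  move=> P Q.
  have [p1 [p' [h1 h1' e1]]] := dec G P.
  have [q1 [q' [h2 h2' e2]]] := dec G Q.
  rewrite (pair_dec h1' e1 h2' e2) -addrA; apply: memv_add; first exact: (b11 G).
  rewrite F2_eq in h1' h2'.
  by apply: rpredD; [apply: brW2 | apply: brW2l].
case: z => [i||||||p||i|i|i||] //= _.
- by rewrite -(brEE F p); exact: gen.
- by rewrite -(brEX F i); exact: gen.
Qed.

Lemma N3_eq : N3 = Spn W3p.
Proof.
apply/eqP; rewrite eqEsubv SpW3_sub andbT; apply/subvP => v hv.
have hF : v \in F2 by apply: (subvP (addvSr N2 N3)).
rewrite F2_eq in hF; move/memSp: hF => hF.
have hc : v cC = 0 by have := brN3l G (d cA) hv; ev (@bH n); move=> e; apply: (solve (k := -1) e); ring.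
have hy : v cY = 0 by have := brN3l G (d cA) hv; ev (@bF n); move=> e; apply: (solve (k := -1) e); ring.
have hu : v cU = 0.
  have := brN3l G (d cB) hv; ev (@bH n); rewrite hy => e.
  by apply: (solve (k := -1) e); ring.
have : v \in Spn (predU E2p W3p).
  apply/memSp; case => [i||||||p||i|i|i||] //= _; try exact: hF.
have : (Spn (predU E2p W3p) <= N2 + Spn W3p)%VS.
  apply: Sp_sub => z; rewrite inE => /orP[/E2_sub //|hz].
  by apply: (subvP (addvSr _ _)); exact: dlt_Sp.
move/subvP => H /H /memv_addP[n2 hn2 [s hs ev]].
have : n2 = 0.
  apply: (z23 G hn2); have -> : n2 = v - s by rewrite ev addrK.
  by apply: rpredB => //; apply: (subvP SpW3_sub).
by move=> n20; rewrite ev n20 add0r.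
Qed.
End Key.

Local Close Scope ring_scope.
Section Count.
Variable n : nat.
Local Notation nb := (nbasis n).

Lemma decK : cancel (@nb_dec n) (@nb_enc n).
Proof.
case=> [i|[i|[i|[i|[p|[[|[|[|[|[|[|[|[|m]]]]]]]] hk]]]]]] //=;
  try (congr (inr (inr (inr (inr (inr _))))); exact: val_inj).
Qed.

Lemma cardP (P : pred nb) : #|P| = (\sum_(c : codeT n) P (nb_dec c))%N.
Proof.
rewrite -sum1_card big_mkcond /= (reindex (@nb_dec n)) /=; last first.
  by exists (@nb_enc n) => x _; [exact: decK | exact: nb_encK].
by apply: eq_bigr => c _; rewrite unfold_in; case: (P _).
Qed.

Lemma cntW3 : #|@W3p n| = (2 * n + 2)%N.
Proof.
rewrite cardP !big_sumType /= !big_ord_recl big_ord0 /=.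
rewrite !sum_nat_const !card_ord; lia.
Qed.

Lemma cntW2 : #|@W2p n| = (#|{: wT n}| + 3 * n + 5)%N.
Proof. rewrite cardP !big_sumType /= !big_ord_recl big_ord0 /= !sum_nat_const !card_ord. have -> : #|{: wT n}| = #|[pred x : wT n | true]| by apply: eq_card. lia. Qed.

Lemma cntC2 : #|predC (@W2p n)| = (n + 3)%N.
Proof. rewrite cardP !big_sumType /= !big_ord_recl big_ord0 /= !sum_nat_const !card_ord; lia. Qed.

Lemma cntAll : #|{: nb}| = (#|@W2p n| + (n + 3))%N.
Proof. by rewrite -cntC2 cardC. Qed.

Lemma cntwT : (#|{: wT n}| * 2 + n)%N = (n * n)%N.
Proof.
rewrite /wT card_sig.
have cs : forall (T : finType) (P : pred T), #|P| = (\sum_(x : T) P x)%N.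
  by move=> T P; rewrite -sum1_card big_mkcond /=; apply: eq_bigr => x _; rewrite unfold_in; case: (P x).
have -> : (n * n)%N = #|{: 'I_n * 'I_n}| by rewrite card_prod card_ord.
rewrite !cs /=.
rewrite [RHS](eq_bigr (fun p : 'I_n * 'I_n => (p.1 < p.2) + (p.2 < p.1) + (p.1 == p.2))%N); last first.
  move=> [i j] _ /=; have -> : (i == j) = (nat_of_ord i == nat_of_ord j) by []. by case: ltngtP => //.
rewrite !big_split /=.
have -> : (\sum_(p : 'I_n * 'I_n) (p.2 < p.1 : nat))%N = (\sum_(p : 'I_n * 'I_n) (p.1 < p.2 : nat))%N.
  rewrite (reindex_inj (h := fun p : 'I_n * 'I_n => (p.2, p.1))) //.
  by move=> [a b] [c d] /= [-> ->].
have -> : (\sum_(p : 'I_n * 'I_n) (p.1 == p.2 : nat))%N = n.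
  rewrite -(pair_big xpredT xpredT (fun i j : 'I_n => (i == j : nat))) /=.
  rewrite (eq_bigr (fun _ => 1%N)) ?sum1_card ?card_ord //.
  move=> i _; rewrite (bigD1 i) //= eqxx big1 // => j /negbTE; by rewrite eq_sym => ->.
by rewrite muln2 -addnn.  
Qed.

End Count.

Local Open Scope ring_scope.


Lemma grading_dims (F : fieldType) (n : nat) (N1 N2 N3 : {vspace nalg F n}) :
  is_grading3 N1 N2 N3 ->
  [/\ \dim N1 = (n + 3)%N, \dim N2 = ((n * n.+1) %/ 2 + 3)%N & \dim N3 = (2 * n + 2)%N].
Proof.
move=> G.
have hF := F2_eq G; have h3 := N3_eq G.
have [e1 _] := dimF_all G; have e2 := gr_dim3 G.
rewrite hF Sp_dim in e1; rewrite h3 Sp_dim cntW3 in e2 *.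
rewrite cntAll in e1 e2.
have c2 := cntW2 n; have cw := cntwT n.
have -> : ((n * n.+1) %/ 2 = #|{: wT n}| + n)%N.
  have -> : (n * n.+1 = (#|{: wT n}| + n) * 2)%N by rewrite mulnS; lia.
  by rewrite mulnK.
split; lia.
Qed.

Section Deriv.
Variables (F : fieldType) (n : nat) (D : 'End(nalg F n)).
Hypothesis charF0 : [pchar F] =i pred0.
Hypothesis hD : is_derivation D.
Hypothesis hE : forall a : F, passmx.leigenvalue D a <-> a \in [:: 1; 2%:R; 3%:R].
Local Notation E k := (passmx.leigenspace D k%:R).
Local Notation V := (nalg F n).

Lemma memE v a : (v \in passmx.leigenspace D a) = (D v == a *: v).
Proof. by rewrite /passmx.leigenspace memv_ker add_lfunE opp_lfunE scale_lfunE id_lfunE subr_eq0. Qed.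

Lemma solve2 (a b l r k : F) : l = r -> a - b = k * (l - r) -> a = b.
Proof. by move=> -> /eqP; rewrite subrr mulr0 subr_eq0 => /eqP. Qed.

Lemma memEP (v : V) a : reflect (D v = a *: v) (v \in passmx.leigenspace D a).
Proof. by rewrite memE; apply: eqP. Qed.

Lemma natF_inj m k : (m%:R == k%:R :> F) = (m == k).
Proof.
have H := (pcharf0P F).1 charF0.
wlog le : m k / (m <= k)%N.
  move=> W; case: (leqP m k) => [|/ltnW] h; first exact: W.
  by rewrite eq_sym W // eq_sym.
rewrite -[k](subnKC le) natrD -{1}[m%:R]addr0 (inj_eq (addrI _)) eq_sym H.
lia.
Qed.

Lemma brE i j v w : v \in E i -> w \in E j -> nbr v w \in E (i + j).
Proof.
rewrite !memE => /eqP hv /eqP hw; apply/eqP.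
by rewrite hD hv hw nbrZl nbrZr -scalerDl natrD.
Qed.

Lemma E0 k : (3 < k)%N -> E k = 0%VS.
Proof.
move=> hk; apply/eqP; apply: contraT => H.
have := (hE k%:R).1 H; rewrite !inE.
have -> : (1 : F) = 1%:R by [].
by rewrite !natF_inj; lia.
Qed.

Lemma cap0 (U W : {vspace V}) : (forall v : V, v \in U -> v \in W -> v = 0) -> (U :&: W = 0)%VS.
Proof. move=> H; apply/eqP; rewrite -subv0; apply/subvP => v /memv_capP[h1 h2]. by rewrite memv0 (H v h1 h2). Qed.

Lemma capE' (i j : nat) (v : V) : (i != j)%N -> v \in E i -> v \in E j -> v = 0.
Proof.
move=> hij /memEP h1 /memEP h2.
have : (i%:R - j%:R) *: v = 0 by rewrite scalerBl -h1 -h2 subrr.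
move/eqP; rewrite scaler_eq0 subr_eq0 natF_inj (negbTE hij) /=; by move/eqP.
Qed.

Lemma capE (i j : nat) : (i != j)%N -> (E i :&: E j = 0)%VS.
Proof. by move=> hij; apply: (@cap0 (E i) (E j)) => v; apply: capE'. Qed.

Lemma dirE : directv (E 1 + E 2 + E 3).
Proof.
rewrite !directv_addE /=.
apply/and3P; split; first (apply/and3P; split).
- exact: eqxx.
- exact: eqxx.
- by apply/eqP; apply: capE.
- exact: eqxx.
apply/eqP; apply: cap0 => v /memv_addP[v1 h1 [v2 h2 ->]] h3.
move/memEP: h1 => h1; move/memEP: h2 => h2; move/memEP: (h3) => h3'.
have h4 : D v1 + D v2 = 3%:R *: (v1 + v2) by rewrite -raddfD. rewrite h1 h2 in h4.
have e : v1 + v2 = - v1.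
  apply/ffunP => z; move/ffunP/(_ z): h4; rewrite !ffunE !scE => e.
  by apply: (solve2 (k := -1) e); ring.
rewrite e in h3 *; apply: (capE' (i := 1) (j := 3) isT _ h3).
by rewrite rpredN; apply/memEP.
Qed.


Lemma gradE : (E 1 + E 2 + E 3)%VS = fullv -> is_grading3 (E 1) (E 2) (E 3).
Proof.
move=> hfull; split; [exact: dirE | exact: hfull |].
move=> i j hi hj v w.
have [->|[->|->]] : i = 1%N \/ i = 2%N \/ i = 3%N by move: hi; lia.
all: have [->|[->|->]] : j = 1%N \/ j = 2%N \/ j = 3%N by move: hj; lia.
all: rewrite /= => hv hw.
- exact: (brE hv hw).
- exact: (brE hv hw).
- by move: (brE hv hw); rewrite E0.
- exact: (brE hv hw).
- by move: (brE hv hw); rewrite E0.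
- by move: (brE hv hw); rewrite E0.
- by move: (brE hv hw); rewrite E0.
- by move: (brE hv hw); rewrite E0.
- by move: (brE hv hw); rewrite E0.
Qed.
End Deriv.


Theorem mainTheorem5 (F : fieldType) (charF0 : [pchar F] =i pred0)
    (n : nat) (hn : (0 < n)%N) :
  (forall D : 'End(nalg F n),
     is_derivation D ->
     (* eigenvalues of D are exactly 1, 2, 3 *)
     (forall a : F, passmx.leigenvalue D a <-> a \in [:: 1; 2%:R; 3%:R]) ->
     (* D is diagonalizable *)
     (passmx.leigenspace D 1 + passmx.leigenspace D 2%:R + passmx.leigenspace D 3%:R)%VS = fullv ->
     [/\ \dim (passmx.leigenspace D 1) = (n + 3)%N,
         \dim (passmx.leigenspace D 2%:R) = ((n * n.+1) %/ 2 + 3)%N &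
         \dim (passmx.leigenspace D 3%:R) = (2 * n + 2)%N]) /\
  (forall N1 N2 N3 : {vspace nalg F n},
     is_grading3 N1 N2 N3 ->
     [/\ \dim N1 = (n + 3)%N,
         \dim N2 = ((n * n.+1) %/ 2 + 3)%N &
         \dim N3 = (2 * n + 2)%N]).
Proof.
split.
- move=> D hD hE hfull.
  exact: (grading_dims (gradE charF0 hD hE hfull)).
- by move=> N1 N2 N3 G; exact: (grading_dims G).
Qed.
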